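(* Let $L$ and $R$ be finite sets of edges (2-subsets of $[n]$) such that there are no $\{l_1<l_2\}\in L$ and $\{r_1<r_2\}\in R$ with $r_1<l_1<r_2<l_2$. For an edge $e=\{v_1<v_2\}$ consider: (Le) there is no $\{l_1<l_2\}\in L$ with $v_1<l_1<v_2<l_2$; (Re) there is no $\{r_1<r_2\}\in R$ with $r_1<v_1<r_2<v_2$. Let $V\subseteq[n]$ with $|V|\ge3$ be such that every edge of the convex polygon $P=\mathrm{conv}(V)$ satisfies (Le) and (Re). Then there is a triangulation $T$ of $P$ with vertices in $V$ every edge of which satisfies (Le) and (Re).
   Context: $\gamma_2=\{(t,t^2):t\in\mathbb{R}\}$. Fix $t_1<\dots<t_n$ and identify $\gamma_2(t_i)$ with $i\in[n]$; $P=\mathrm{conv}\{\gamma_2(t_i):i\in V\}$. $L$ and $R$ may intersect or be empty. *)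

(* Defs.v *)
(* Points gamma_2(t_1),...,gamma_2(t_n) on the parabola,
   with t_1 < ... < t_n, are identified with their indices in 'I_n.
   An edge {v1 < v2} is represented as a pair (v1, v2) with v1 < v2. *)
From mathcomp Require Import all_boot all_order.
Set Implicit Arguments. Unset Strict Implicit. Unset Printing Implicit Defensive.

Section Defs.
Variable n : nat.
Notation edge := ('I_n * 'I_n)%type.

Definition is_edge (e : edge) : bool := (e.1 < e.2)%N.

Definition edge_in (V : {set 'I_n}) (e : edge) : bool :=
  [&& is_edge e, e.1 \in V & e.2 \in V].

Definition condL (L : {set edge}) (e : edge) : bool :=
  ~~ [exists l in L, [&& (e.1 < l.1)%N, (l.1 < e.2)%N & (e.2 < l.2)%N]].

Definition condR (R : {set edge}) (e : edge) : bool :=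
  ~~ [exists r in R, [&& (r.1 < e.1)%N, (e.1 < r.2)%N & (r.2 < e.2)%N]].

Definition LR_compatible (L R : {set edge}) : bool :=
  ~~ [exists l in L, exists r in R,
        [&& (r.1 < l.1)%N, (l.1 < r.2)%N & (r.2 < l.2)%N]].

(* Points on the parabola are in convex position; {a<b} with a,b in V is an
   edge of P = conv(V) iff all other points of V lie on one side of the line
   through a and b, i.e. all lie strictly between a and b or all lie outside. *)
Definition polygon_edge (V : {set 'I_n}) (e : edge) : bool :=
  edge_in V e &&
  ([forall c in V, (e.1 <= c <= e.2)%N] ||
   [forall c in V, (c <= e.1)%N || (e.2 <= c)%N]).

(* For points in convex position (on the parabola), the open segments
   [a,b] and [c,d] (a<b, c<d) cross iff their endpoints interleave. *)
Definition cross (e f : edge) : bool :=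
  [&& (e.1 < f.1)%N, (f.1 < e.2)%N & (e.2 < f.2)%N] ||
  [&& (f.1 < e.1)%N, (e.1 < f.2)%N & (f.2 < e.2)%N].

(* The edge set of a triangulation of the convex polygon conv(V) with vertices
   in V: a maximal set of pairwise non-crossing segments between points of V. *)
Definition triangulation_edges (V : {set 'I_n}) (T : {set edge}) : Prop :=
  [/\ {in T, forall e, edge_in V e},
      {in T &, forall e f, ~~ cross e f} &
      forall e, edge_in V e -> e \notin T -> exists2 f, f \in T & cross e f].

End Defs.

(* Main.v *)
Require Import Defs.
From mathcomp Require Import all_boot all_order.
From mathcomp Require Import zify.
From Stdlib Require Import Classical.
Set Implicit Arguments. Unset Strict Implicit. Unset Printing Implicit Defensive.

Definition good n (L R : {set 'I_n * 'I_n}) (e : 'I_n * 'I_n) :=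
  condL L e && condR R e.

Lemma condLP n (L : {set 'I_n * 'I_n}) (x y l1 l2 : 'I_n) :
  condL L (x, y) -> (l1, l2) \in L -> (x < l1)%N -> (l1 < y)%N -> (y < l2)%N -> False.
Proof.
move=> H lL a b c; move/existsPn: H => /(_ (l1, l2)); by rewrite lL /= a b c.
Qed.

Lemma condRP n (R : {set 'I_n * 'I_n}) (x y r1 r2 : 'I_n) :
  condR R (x, y) -> (r1, r2) \in R -> (r1 < x)%N -> (x < r2)%N -> (r2 < y)%N -> False.
Proof.
move=> H lL a b c; move/existsPn: H => /(_ (r1, r2)); by rewrite lL /= a b c.
Qed.

Lemma condLN n (L : {set 'I_n * 'I_n}) (x y : 'I_n) :
  ~~ condL L (x, y) -> exists l1 l2, [/\ (l1, l2) \in L, (x < l1)%N, (l1 < y)%N & (y < l2)%N].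
Proof.
rewrite negbK => /existsP [[l1 l2] /andP [lL /and3P [a b c]]]; by exists l1, l2.
Qed.

Lemma condRN n (R : {set 'I_n * 'I_n}) (x y : 'I_n) :
  ~~ condR R (x, y) -> exists r1 r2, [/\ (r1, r2) \in R, (r1 < x)%N, (x < r2)%N & (r2 < y)%N].
Proof.
rewrite negbK => /existsP [[l1 l2] /andP [lL /and3P [a b c]]]; by exists l1, l2.
Qed.

Lemma compatP n (L R : {set 'I_n * 'I_n}) (l1 l2 r1 r2 : 'I_n) :
  LR_compatible L R -> (l1, l2) \in L -> (r1, r2) \in R ->
  (r1 < l1)%N -> (l1 < r2)%N -> (r2 < l2)%N -> False.
Proof.
move=> H lL rR a b c; move/existsPn: H => /(_ (l1, l2)); rewrite lL /=.
move/existsPn => /(_ (r1, r2)); by rewrite rR /= a b c.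
Qed.

Lemma crossC n (e f : 'I_n * 'I_n) : cross e f = cross f e.
Proof. by rewrite /cross orbC. Qed.

Lemma poly_nocross n (V : {set 'I_n}) e f :
  polygon_edge V e -> edge_in V f -> ~~ cross e f.
Proof.
case/andP=> _ H /and3P [ef f1 f2]; move: ef; rewrite /is_edge /cross => ef.
case/orP: H => /forallP H; move: (H f.1) (H f.2); rewrite f1 f2 /= => h1 h2; lia.
Qed.

Lemma poly_in_T n (V : {set 'I_n}) T e :
  triangulation_edges V T -> polygon_edge V e -> e \in T.
Proof.
case=> H1 H2 H3 pe; apply/negPn/negP => eT.
have ei : edge_in V e by case/andP: pe.
case: (H3 e ei eT) => f fT cef.
by move: (poly_nocross pe (H1 f fT)); rewrite cef.
Qed.

Lemma ex_minF (T : finType) (P : pred T) (F : T -> nat) :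
  (exists x, P x) -> exists m, P m /\ forall c, P c -> (F m <= F c)%N.
Proof.
case=> x Px; case: (arg_minnP F Px) => m Pm Hm; by exists m.
Qed.

Lemma ex_maxF (T : finType) (P : pred T) (F : T -> nat) :
  (exists x, P x) -> exists m, P m /\ forall c, P c -> (F c <= F m)%N.
Proof.
case=> x Px; case: (arg_maxnP F Px) => m Pm Hm; by exists m.
Qed.

Lemma card4 n (V : {set 'I_n}) (a b c d : 'I_n) :
  a \in V -> b \in V -> c \in V -> d \in V ->
  (a != b :> nat) -> (a != c :> nat) -> (a != d :> nat) ->
  (b != c :> nat) -> (b != d :> nat) -> (c != d :> nat) -> (4 <= #|V|)%N.
Proof.
move=> aV bV cV dV ab ac ad bc bd cd.
rewrite cardE.
have -> : 4 = size [:: a; b; c; d] by [].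
apply: uniq_leq_size.
  by rewrite /= !inE !negb_or -!val_eqE ab ac ad bc bd cd.
move=> x; rewrite !inE mem_enum => /or4P [] /eqP ->; done.
Qed.

Ltac clean := repeat match goal with
 | H : is_true (condL _ _) |- _ => clear H
 | H : is_true (condR _ _) |- _ => clear H
 | H : is_true (LR_compatible _ _) |- _ => clear H
 | H : is_true (_ \in _) |- _ => clear H
 | H : is_true (good _ _ _) |- _ => clear H
 | H : is_true (polygon_edge _ _) |- _ => clear H
 | H : forall _, _ |- _ => clear H
 end.
Ltac slia := clean; lia.

Definition ear n (V : {set 'I_n}) (u v w : 'I_n) : Prop :=
  [/\ u \in V, v \in V, w \in V, (u < v < w)%N &
      forall c, c \in V -> ~~ ((u < c < v) || (v < c < w))%N].

Lemma ear_poly1 n (V : {set 'I_n}) u v w : ear V u v w -> polygon_edge V (u, v).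
Proof.
case=> uV vV wV uvw Hc; rewrite /polygon_edge /edge_in /is_edge /= uV vV.
apply/andP; split; first by lia.
apply/orP; right; apply/forallP => c; apply/implyP => cV.
move: (Hc c cV) => /=; lia.
Qed.

Lemma ear_poly2 n (V : {set 'I_n}) u v w : ear V u v w -> polygon_edge V (v, w).
Proof.
case=> uV vV wV uvw Hc; rewrite /polygon_edge /edge_in /is_edge /= wV vV.
apply/andP; split; first by lia.
apply/orP; right; apply/forallP => c; apply/implyP => cV.
move: (Hc c cV) => /=; lia.
Qed.

Lemma ear_poly3 n (V : {set 'I_n}) u v w : ear V u v w -> polygon_edge (V :\ v) (u, w).
Proof.
case=> uV vV wV uvw Hc; rewrite /polygon_edge /edge_in /is_edge /= !in_setD1 uV wV.
rewrite -!val_eqE /=.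
apply/andP; split; first by lia.
apply/orP; right; apply/forallP => c; apply/implyP; rewrite in_setD1 -val_eqE.
case/andP=> cv cV; have cv2 : (nat_of_ord c != nat_of_ord v) := cv.
move: (Hc c cV) => /=; lia.
Qed.

Lemma poly_mnmx n (V : {set 'I_n}) mn mx :
  mn \in V -> mx \in V -> (mn < mx)%N -> (forall c, c \in V -> (mn <= c <= mx)%N) ->
  polygon_edge V (mn, mx).
Proof.
move=> mnV mxV lt H; rewrite /polygon_edge /edge_in /is_edge /= mnV mxV lt /=.
apply/orP; left; apply/forallP => c; apply/implyP => cV; exact: H.
Qed.

Lemma earA n (L R : {set 'I_n * 'I_n}) (V : {set 'I_n}) mn mx u v w :
  (forall e, polygon_edge V e -> good L R e) ->
  mn \in V -> mx \in V -> (forall c, c \in V -> (mn <= c <= mx)%N) ->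
  ear V u v w -> ~~ good L R (u, w) ->
  (exists l1 l2, [/\ (l1, l2) \in L, (l1 : nat) = v, (w < l2)%N & (l2 <= mx)%N]) \/
  (exists r1 r2, [/\ (r1, r2) \in R, (r2 : nat) = v & (r1 < u)%N]).
Proof.
move=> Hpe mnV mxV Hmm E.
have /andP [g1L g1R] := Hpe _ (ear_poly1 E).
have /andP [g2L g2R] := Hpe _ (ear_poly2 E).
case: E => uV vV wV uvw Hc.
have muv := Hmm u uV; have mw := Hmm w wV.
have /andP [g3L g3R] := Hpe _ (poly_mnmx mnV mxV (ltac:(slia)) Hmm).
rewrite /good negb_and => /orP [/condLN [l1 [l2 [lL a b c]]] | /condRN [r1 [r2 [rR a b c]]]].
- left; exists l1, l2; split => //.
  + case: (ltngtP l1 v) => h //.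
    * by exfalso; apply: (condLP g1L lL); slia.
    * by exfalso; apply: (condLP g2L lL); slia.
  + case: (leqP l2 mx) => h //.
    by exfalso; apply: (condLP g3L lL); slia.
- right; exists r1, r2; split => //.
  case: (ltngtP r2 v) => h //.
  * by exfalso; apply: (condRP g1R rR); slia.
  * by exfalso; apply: (condRP g2R rR); slia.
Qed.

Lemma ex_next n (V : {set 'I_n}) (x : 'I_n) :
  (exists c, c \in V /\ (x < c)%N) ->
  exists y, [/\ y \in V, (x < y)%N & forall c, c \in V -> (x < c)%N -> (y <= c)%N].
Proof.
move=> [c [cV xc]].
have Pc : (c \in V) && (x < c)%N by rewrite cV xc.
have [y [/andP [yV xy] Hy]] :=
  @ex_minF _ (fun c : 'I_n => (c \in V) && (x < c)%N) (fun c : 'I_n => nat_of_ord c)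
    (ex_intro _ c Pc).
exists y; split => // d dV xd; apply: Hy; by apply/andP.
Qed.

Lemma ord_eq n (a b : 'I_n) : (a : nat) = b -> a = b.
Proof. exact: val_inj. Qed.

Lemma ear_exists n (L R : {set 'I_n * 'I_n}) (V : {set 'I_n}) :
  LR_compatible L R -> (4 <= #|V|)%N ->
  (forall e, polygon_edge V e -> good L R e) ->
  exists u v w, ear V u v w /\ good L R (u, w).
Proof.
move=> HC HV Hpe.
have /card_gt0P [x0 x0V] : (0 < #|V|)%N by lia.
have [mn [mnV mnP]] := @ex_minF _ (fun c : 'I_n => c \in V) (fun c => nat_of_ord c)
   (ex_intro _ x0 x0V).
have [mx [mxV mxP]] := @ex_maxF _ (fun c : 'I_n => c \in V) (fun c => nat_of_ord c)
   (ex_intro _ x0 x0V).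
have Hmm : forall c, c \in V -> (mn <= c <= mx)%N.
  by move=> c cV; rewrite mnP ?mxP.
apply: NNPP => Hno.
have Hbad : forall u v w, ear V u v w -> ~~ good L R (u, w).
  by move=> u v w E; apply/negP => g; apply: Hno; exists u, v, w.
have ex2 : exists c, c \in V /\ (mn < c)%N.
  apply: NNPP => H.
  have sub : V \subset [set mn].
    apply/subsetP => c cV; rewrite inE; apply/eqP; apply: ord_eq.
    have := mnP c cV; case: (ltnP mn c) => h; last by lia.
    by exfalso; apply: H; exists c.
  by have := subset_leq_card sub; rewrite cards1; lia.
have [a2 [a2V mna2 a2P]] := ex_next ex2.
have ex3 : exists c, c \in V /\ (a2 < c)%N.
  apply: NNPP => H.
  have sub : V \subset [set mn; a2].
    apply/subsetP => c cV; rewrite !inE.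
    case: (ltnP mn c) => h.
      have := a2P c cV h; case: (ltnP a2 c) => h2.
        by exfalso; apply: H; exists c.
      by move=> h3; apply/orP; right; apply/eqP; apply: ord_eq; lia.
    by apply/orP; left; apply/eqP; apply: ord_eq; have := mnP c cV; lia.
  have := subset_leq_card sub; rewrite cards2.
  move=> h; have : ((mn != a2).+1 <= 2)%N by case: (mn != a2).
  by clear -h HV; lia.
have [a3 [a3V a2a3 a3P]] := ex_next ex3.
have E : ear V mn a2 a3.
  split => //; first by rewrite mna2 a2a3.
  move=> c cV; have := a2P c cV; have := a3P c cV; have := mnP c cV.
  clear -mna2 a2a3; lia.
have /andP [g3L g3R] := Hpe _ (poly_mnmx mnV mxV (ltac:(have := Hmm _ a3V; lia)) Hmm).
case: (earA Hpe mnV mxV Hmm E (Hbad _ _ _ E)) =>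
  [[l1 [l2 [lL l1v l2w l2mx]]] | [r1 [r2 [rR r2v r1u]]]]; last first.
  apply: (condRP g3R rR); have := Hmm _ a3V; clear -r1u r2v a2a3 mna2; lia.
pose P := fun l : 'I_n * 'I_n =>
  [&& l \in L, l.1 \in V, [exists c in V, (l.1 < c < l.2)%N] & (l.2 <= mx)%N].
have P12 : P (l1, l2).
  rewrite /P /= lL l2mx (ord_eq l1v) a2V /= andbT.
  by apply/existsP; exists a3; rewrite a3V /= a2a3 l2w.
have [[m1 m2] [Pm Hm]] := @ex_maxF _ P (fun l => nat_of_ord l.1) (ex_intro (fun l => is_true (P l)) (l1, l2) P12).
move: Pm; rewrite /P /= => /and4P [mL m1V /existsP [c /andP [cV /andP [m1c cm2]]] m2mx].
have [c' [c'V m1c' c'P]] := @ex_next n V m1 (ex_intro _ c (conj cV m1c)).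
have c'c := c'P c cV m1c.
have ex4 : exists d, d \in V /\ (c' < d)%N by exists mx; split => //; clear -c'c cm2 m2mx; lia.
have [w' [w'V c'w' w'P]] := ex_next ex4.
have E' : ear V m1 c' w'.
  split => //; first by rewrite m1c' c'w'.
  move=> d dV; have := c'P d dV; have := w'P d dV.
  clear -m1c' c'w'; lia.
case: (earA Hpe mnV mxV Hmm E' (Hbad _ _ _ E')) =>
  [[l1' [l2' [lL' e1 e2 e3]]] | [r1 [r2 [rR e1 e2]]]].
- have P' : P (l1', l2').
    rewrite /P /= lL' e3 (ord_eq e1) c'V /= andbT.
    by apply/existsP; exists w'; rewrite w'V /= c'w' e2.
  have := Hm _ P' => /=; clear -e1 m1c'; lia.
- by apply: (compatP HC mL rR); clear -e1 e2 m1c' c'c cm2; lia.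
Qed.

Lemma three_poly n (V : {set 'I_n}) e :
  (#|V| <= 3)%N -> edge_in V e -> polygon_edge V e.
Proof.
case: e => x y HV ei; rewrite /polygon_edge ei /=.
case/and3P: ei => /= xy xV yV.
apply/negPn/negP; rewrite negb_or => /andP [/forallPn [c]] /=.
rewrite negb_imply => /andP [cV hc] /forallPn [d] /=.
rewrite negb_imply => /andP [dV hd].
have := @card4 n V x y c d xV yV cV dV.
by clear -HV xy hc hd; lia.
Qed.

Lemma edge_in_sub n (V : {set 'I_n}) v e : edge_in (V :\ v) e -> edge_in V e.
Proof.
case: e => x y; rewrite /edge_in /= !in_setD1 => /and3P [-> /andP [_ ->] /andP [_ ->]].
done.
Qed.

Lemma poly_sub n (V : {set 'I_n}) u v w e :
  ear V u v w -> polygon_edge (V :\ v) e -> polygon_edge V e \/ e = (u, w).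
Proof.
case: e => x y.
case=> uV vV wV uvw Hc.
case/andP => /and3P [/= xy]; rewrite !in_setD1 => /andP [xv xV] /andP [yv yV].
have xv' : (nat_of_ord x != nat_of_ord v) := xv.
have yv' : (nat_of_ord y != nat_of_ord v) := yv.
have uv : u != v by apply/eqP => h; move: uvw; rewrite h; clear; lia.
have wv : w != v by apply/eqP => h; move: uvw; rewrite h; clear; lia.
case/orP => /forallP A.
- left; rewrite /polygon_edge /edge_in /= xy xV yV /=.
  apply/orP; left; apply/forallP => c; apply/implyP => cV.
  case: (eqVneq c v) => [-> | cv].
    have := A u; have := A w; rewrite !in_setD1 uV wV uv wv /=.
    by clear -uvw; lia.
  by have := A c; rewrite in_setD1 cv cV.
- case: (boolP ((x < v) && (v < y))%N) => h.
  + right.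
    have := A u; have := A w; rewrite !in_setD1 uV wV uv wv /= => hw hu.
    have hx := Hc x xV; have hy := Hc y yV.
    by congr pair; apply: ord_eq; clear -hw hu hx hy uvw xv' yv' h xy; lia.
  + left; rewrite /polygon_edge /edge_in /= xy xV yV /=.
    apply/orP; right; apply/forallP => c; apply/implyP => cV.
    case: (eqVneq c v) => [-> | cv].
      by clear -h; lia.
    by have := A c; rewrite in_setD1 cv cV.
Qed.

Lemma main_ind n (L R : {set 'I_n * 'I_n}) : LR_compatible L R ->
  forall k (V : {set 'I_n}), #|V| = k.+3 ->
  (forall e, polygon_edge V e -> good L R e) ->
  exists T, triangulation_edges V T /\ (forall e, e \in T -> good L R e).
Proof.
move=> HC; elim=> [|k IH] V HV Hpe.
  exists [set e | edge_in V e]; split.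
    split.
    - by move=> e; rewrite inE.
    - move=> e f; rewrite !inE => ee ef; apply: poly_nocross ef.
      by apply: three_poly ee; rewrite HV.
    - by move=> e ee; rewrite inE ee.
  by move=> e; rewrite inE => ee; apply: Hpe; apply: three_poly ee; rewrite HV.
have HV4 : (4 <= #|V|)%N by rewrite HV.
have [u [v [w [E g]]]] := ear_exists HC HV4 Hpe.
have E0 := E; case: E0 => uV vV wV uvw Hc.
have HV' : #|V :\ v| = k.+3.
  by move: HV; rewrite (cardsD1 v) vV; rewrite add1n => -[].
have Hpe' : forall e, polygon_edge (V :\ v) e -> good L R e.
  by move=> e pe; case: (poly_sub E pe) => [/Hpe // | ->].
have [T' [Htr Tg]] := IH _ HV' Hpe'.
have uwT := poly_in_T Htr (ear_poly3 E).
case: Htr => T1 T2 T3.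
set T := (u, v) |: ((v, w) |: T').
have TV : forall e, e \in T -> edge_in V e.
  move=> e; case/setU1P => [-> | ]; first by case/andP: (ear_poly1 E).
  case/setU1P => [-> | eT]; first by case/andP: (ear_poly2 E).
  exact: edge_in_sub (T1 e eT).
have T'T : forall e, e \in T' -> e \in T by move=> e eT; rewrite !inE eT !orbT.
exists T; split; first split.
- exact: TV.
- move=> e f eT fT.
  case/setU1P: (eT) => [-> | ]; first exact: poly_nocross (ear_poly1 E) (TV f fT).
  case/setU1P => [-> | eT']; first exact: poly_nocross (ear_poly2 E) (TV f fT).
  case/setU1P: (fT) => [-> | ].
    by rewrite crossC; exact: poly_nocross (ear_poly1 E) (TV e eT).
  case/setU1P => [-> | fT'].
    by rewrite crossC; exact: poly_nocross (ear_poly2 E) (TV e eT).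
  exact: T2.
- move=> [x y] ee; rewrite !inE => /norP [ne1 /norP [ne2 nT']].
  case/and3P: ee; rewrite /is_edge /= => xy xV yV.
  case: (eqVneq x v) => [xv | xv].
    subst x.
    have yw : (nat_of_ord y != nat_of_ord w).
      by apply/eqP => h; move: ne2; rewrite (ord_eq h) eqxx.
    exists (u, w); first exact: T'T.
    have := Hc y yV; rewrite /cross /=.
    by clear -yw xy uvw; lia.
  case: (eqVneq y v) => [yv | yv].
    subst y.
    have xu : (nat_of_ord x != nat_of_ord u).
      by apply/eqP => h; move: ne1; rewrite (ord_eq h) eqxx.
    exists (u, w); first exact: T'T.
    have := Hc x xV; rewrite /cross /=.
    by clear -xu xy uvw; lia.
  have ei : edge_in (V :\ v) (x, y) by rewrite /edge_in /is_edge /= !in_setD1 xv yv xV yV xy.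
  case: (T3 _ ei nT') => f fT cf; exists f => //; exact: T'T.
- move=> e; case/setU1P => [-> | ]; first exact: Hpe _ (ear_poly1 E).
  case/setU1P => [-> | /Tg //]; exact: Hpe _ (ear_poly2 E).
Qed.

Theorem proposition3p9 (n : nat) (L R : {set 'I_n * 'I_n}) (V : {set 'I_n}) :
  {in L, forall e, is_edge e} ->
  {in R, forall e, is_edge e} ->
  LR_compatible L R ->
  (3 <= #|V|)%N ->
  (forall e, polygon_edge V e -> condL L e /\ condR R e) ->
  exists T : {set 'I_n * 'I_n},
    triangulation_edges V T /\ (forall e, e \in T -> condL L e /\ condR R e).
Proof.
move=> _ _ HC HV Hpe.
have Hpe' : forall e, polygon_edge V e -> good L R e.
  by move=> e /Hpe [a b]; rewrite /good a b.
have HV' : #|V| = (#|V| - 3).+3 by clear -HV; lia.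
have [T [Ht Tg]] := main_ind HC HV' Hpe'.
by exists T; split => // e /Tg /andP [a b].
Qed.
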